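(* Every shifted hyperbolic operator $T\in L_{aut}(\mathcal B)$ has the shadowing property but does not have the unique shadowing property.
   Context: $\mathcal B$ is a Banach space. $T$ is generalized hyperbolic if there is a decomposition $\mathcal B=E^-\oplus E^+$ into complementary closed subspaces with $T(E^+)\subset E^+$, $T^{-1}(E^-)\subset E^-$, and $T|_{E^+}$, $T^{-1}|_{E^-}$ uniform contractions; $T$ is shifted hyperbolic if in addition $E^-\cap T^{-1}(E^+)\ne\{0\}$. A $\delta$-pseudo-orbit is a sequence $(x_n)_{n\in\mathbb Z}$ with $|x_{n+1}-Tx_n|<\delta$; $y$ $\varepsilon$-shadows it if $|x_n-T^ny|<\varepsilon$ for all $n$. Shadowing property: for every $\varepsilon>0$ there is $\delta>0$ such that every $\delta$-pseudo-orbit is $\varepsilon$-shadowed. Unique shadowing property: there exist $\varepsilon_0,\delta_0>0$ such that for every $0<\varepsilon\le\varepsilon_0$ there is $0<\delta\le\delta_0$ such that every $\delta$-pseudo-orbit is $\varepsilon$-shadowed by exactly one point. *)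

(* Defs.v *)
From Stdlib Require Import Reals ZArith.
Open Scope R_scope.

Record BanachSpace := {
  bs_car :> Type;
  bs_zero : bs_car;
  bs_add : bs_car -> bs_car -> bs_car;
  bs_opp : bs_car -> bs_car;
  bs_scal : R -> bs_car -> bs_car;
  bs_norm : bs_car -> R;
  bs_addA : forall x y z, bs_add x (bs_add y z) = bs_add (bs_add x y) z;
  bs_addC : forall x y, bs_add x y = bs_add y x;
  bs_add0 : forall x, bs_add x bs_zero = x;
  bs_addN : forall x, bs_add x (bs_opp x) = bs_zero;
  bs_scal1 : forall x, bs_scal 1 x = x;
  bs_scalA : forall a b x, bs_scal a (bs_scal b x) = bs_scal (a * b) x;
  bs_scalDr : forall a x y, bs_scal a (bs_add x y) = bs_add (bs_scal a x) (bs_scal a y);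
  bs_scalDl : forall a b x, bs_scal (a + b) x = bs_add (bs_scal a x) (bs_scal b x);
  bs_norm_eq0 : forall x, bs_norm x = 0 -> x = bs_zero;
  bs_normZ : forall a x, bs_norm (bs_scal a x) = Rabs a * bs_norm x;
  bs_normD : forall x y, bs_norm (bs_add x y) <= bs_norm x + bs_norm y;
  bs_complete : forall u : nat -> bs_car,
    (forall e, 0 < e -> exists N, forall m n, (N <= m)%nat -> (N <= n)%nat ->
        bs_norm (bs_add (u m) (bs_opp (u n))) < e) ->
    exists l, forall e, 0 < e -> exists N, forall n, (N <= n)%nat ->
        bs_norm (bs_add (u n) (bs_opp l)) < e
}.

Arguments bs_zero {_}.
Arguments bs_add {_} _ _.
Arguments bs_opp {_} _.
Arguments bs_scal {_} _ _.
Arguments bs_norm {_} _.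

Section Ops.
Context {B : BanachSpace}.

Definition bs_sub (x y : B) : B := bs_add x (bs_opp y).

Definition is_linear (T : B -> B) : Prop :=
  (forall x y, T (bs_add x y) = bs_add (T x) (T y)) /\
  (forall a x, T (bs_scal a x) = bs_scal a (T x)).

Definition is_bounded_linear (T : B -> B) : Prop :=
  is_linear T /\ exists C, forall x, bs_norm (T x) <= C * bs_norm x.

Definition is_aut (T : B -> B) : Prop :=
  is_bounded_linear T /\
  exists S : B -> B, is_bounded_linear S /\
    (forall x, S (T x) = x) /\ (forall x, T (S x) = x).

Definition closed_subspace (E : B -> Prop) : Prop :=
  E bs_zero /\
  (forall x y, E x -> E y -> E (bs_add x y)) /\
  (forall a x, E x -> E (bs_scal a x)) /\
  (forall (u : nat -> B) l, (forall n, E (u n)) ->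
     (forall e, 0 < e -> exists N, forall n, (N <= n)%nat -> bs_norm (bs_sub (u n) l) < e) ->
     E l).

Definition complementary (E1 E2 : B -> Prop) : Prop :=
  closed_subspace E1 /\ closed_subspace E2 /\
  (forall x, E1 x -> E2 x -> x = bs_zero) /\
  (forall x, exists a b, E1 a /\ E2 b /\ x = bs_add a b).

Fixpoint iter_op (T : B -> B) (n : nat) (x : B) : B :=
  match n with O => x | S k => T (iter_op T k x) end.

Definition uniform_contraction_on (U : B -> B) (E : B -> Prop) : Prop :=
  exists C t, 0 < C /\ 0 < t < 1 /\
    forall n x, E x -> bs_norm (iter_op U n x) <= C * t ^ n * bs_norm x.

Definition gen_hyperbolic_splitting (T Tinv : B -> B) (Em Ep : B -> Prop) : Prop :=
  complementary Em Ep /\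
  (forall x, Ep x -> Ep (T x)) /\
  (forall x, Em x -> Em (Tinv x)) /\
  uniform_contraction_on T Ep /\
  uniform_contraction_on Tinv Em.

Definition shifted_hyperbolic (T : B -> B) : Prop :=
  exists Tinv Em Ep,
    (forall x, Tinv (T x) = x) /\ (forall x, T (Tinv x) = x) /\
    gen_hyperbolic_splitting T Tinv Em Ep /\
    exists x, x <> bs_zero /\ Em x /\ Ep (T x).

Definition pseudo_orbit (T : B -> B) (delta : R) (x : Z -> B) : Prop :=
  forall n : Z, bs_norm (bs_sub (x (n + 1)%Z) (T (x n))) < delta.

(** y eps-shadows x: |x_n - T^n y| < eps for all n in Z; here T^n y, n in Z,
    is described as the unique full orbit z with z 0 = y, z (n+1) = T (z n)
    (T being invertible). *)
Definition shadows (T : B -> B) (eps : R) (y : B) (x : Z -> B) : Prop :=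
  exists z : Z -> B, z 0%Z = y /\ (forall n : Z, z (n + 1)%Z = T (z n)) /\
    forall n : Z, bs_norm (bs_sub (x n) (z n)) < eps.

Definition shadowing_property (T : B -> B) : Prop :=
  forall eps, 0 < eps -> exists delta, 0 < delta /\
    forall x, pseudo_orbit T delta x -> exists y, shadows T eps y x.

Definition unique_shadowing_property (T : B -> B) : Prop :=
  exists eps0 delta0, 0 < eps0 /\ 0 < delta0 /\
    forall eps, 0 < eps -> eps <= eps0 ->
      exists delta, 0 < delta /\ delta <= delta0 /\
        forall x, pseudo_orbit T delta x ->
          exists y, shadows T eps y x /\ forall y', shadows T eps y' x -> y' = y.

End Ops.

(* Main.v *)
Require Import Defs.
From Stdlib Require Import Reals ZArith.
Open Scope R_scope.
From Stdlib Require Import Lra Lia Classical ClassicalEpsilon.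
Local Notation complementary := Defs.complementary.


Lemma add0l {B : BanachSpace} (x : B) : bs_add bs_zero x = x.
Proof. rewrite bs_addC. apply bs_add0. Qed.

Lemma addNl {B : BanachSpace} (x : B) : bs_add (bs_opp x) x = bs_zero.
Proof. rewrite bs_addC. apply bs_addN. Qed.

Lemma add_cancel {B : BanachSpace} (x y z : B) : bs_add x y = bs_add x z -> y = z.
Proof.
  intro H. rewrite <- (add0l y), <- (add0l z), <- (addNl x), <- !bs_addA, H. reflexivity.
Qed.

Lemma opp_unique {B : BanachSpace} (x y : B) : bs_add x y = bs_zero -> y = bs_opp x.
Proof. intro H. apply (add_cancel x). rewrite H, bs_addN. reflexivity. Qed.

Lemma oppK {B : BanachSpace} (x : B) : bs_opp (bs_opp x) = x.
Proof. symmetry. apply opp_unique. apply addNl. Qed.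

Lemma opp0 {B : BanachSpace} : bs_opp (@bs_zero B) = bs_zero.
Proof. symmetry. apply opp_unique. apply bs_add0. Qed.

Lemma addACA {B : BanachSpace} (a b c d : B) :
  bs_add (bs_add a b) (bs_add c d) = bs_add (bs_add a c) (bs_add b d).
Proof.
  rewrite <- !bs_addA. f_equal. rewrite !bs_addA. f_equal. apply bs_addC.
Qed.

Lemma oppD {B : BanachSpace} (x y : B) : bs_opp (bs_add x y) = bs_add (bs_opp x) (bs_opp y).
Proof. symmetry. apply opp_unique. rewrite addACA, !bs_addN. apply bs_add0. Qed.

Lemma subK {B : BanachSpace} (x y : B) : bs_add (bs_sub x y) y = x.
Proof. unfold bs_sub. rewrite <- bs_addA, addNl. apply bs_add0. Qed.

Lemma addK {B : BanachSpace} (x y : B) : bs_sub (bs_add x y) y = x.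
Proof. unfold bs_sub. rewrite <- bs_addA, bs_addN. apply bs_add0. Qed.

Lemma subrr {B : BanachSpace} (x : B) : bs_sub x x = bs_zero.
Proof. apply bs_addN. Qed.

Lemma sub0 {B : BanachSpace} (x : B) : bs_sub x bs_zero = x.
Proof. unfold bs_sub. rewrite opp0. apply bs_add0. Qed.

Lemma sub_eq0 {B : BanachSpace} (x y : B) : bs_sub x y = bs_zero -> x = y.
Proof. intro H. rewrite <- (subK x y), H. apply add0l. Qed.

Lemma scal0 {B : BanachSpace} (x : B) : bs_scal 0 x = bs_zero.
Proof.
  apply (add_cancel (bs_scal 0 x)). rewrite <- bs_scalDl, Rplus_0_l, bs_add0. reflexivity.
Qed.

Lemma scalx0 {B : BanachSpace} (a : R) : bs_scal a (@bs_zero B) = bs_zero.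
Proof.
  apply (add_cancel (bs_scal a bs_zero)). rewrite <- bs_scalDr, !bs_add0. reflexivity.
Qed.

Lemma opp_scal {B : BanachSpace} (x : B) : bs_opp x = bs_scal (-1) x.
Proof.
  symmetry. apply opp_unique. rewrite <- (bs_scal1 _ x) at 1. rewrite <- bs_scalDl.
  replace (1 + -1) with 0 by ring. apply scal0.
Qed.

Lemma norm0 {B : BanachSpace} : bs_norm (@bs_zero B) = 0.
Proof. rewrite <- (scal0 bs_zero), bs_normZ, Rabs_R0. ring. Qed.

Lemma norm_opp {B : BanachSpace} (x : B) : bs_norm (bs_opp x) = bs_norm x.
Proof. rewrite opp_scal, bs_normZ, Rabs_left by lra. ring. Qed.

Lemma norm_ge0 {B : BanachSpace} (x : B) : 0 <= bs_norm x.
Proof.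
  pose proof (bs_normD _ x (bs_opp x)) as H. rewrite bs_addN, norm0, norm_opp in H. lra.
Qed.

Lemma sub_sym_norm {B : BanachSpace} (x y : B) : bs_norm (bs_sub x y) = bs_norm (bs_sub y x).
Proof.
  rewrite <- norm_opp. unfold bs_sub. rewrite oppD, oppK, bs_addC. reflexivity.
Qed.

Lemma sub_tri {B : BanachSpace} (x y z : B) :
  bs_norm (bs_sub x z) <= bs_norm (bs_sub x y) + bs_norm (bs_sub y z).
Proof.
  replace (bs_sub x z) with (bs_add (bs_sub x y) (bs_sub y z)). apply bs_normD.
  unfold bs_sub. rewrite <- bs_addA, (bs_addA _ (bs_opp y)), addNl, add0l. reflexivity.
Qed.

Lemma norm_sub_le {B : BanachSpace} (x y : B) : bs_norm (bs_sub x y) <= bs_norm x + bs_norm y.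
Proof. unfold bs_sub. rewrite <- (norm_opp y). apply bs_normD. Qed.

Lemma norm_le_sub {B : BanachSpace} (x y : B) : bs_norm x <= bs_norm (bs_sub x y) + bs_norm y.
Proof. rewrite <- (subK x y) at 1. apply bs_normD. Qed.

Lemma subD {B : BanachSpace} (a b c d : B) :
  bs_sub (bs_add a b) (bs_add c d) = bs_add (bs_sub a c) (bs_sub b d).
Proof. unfold bs_sub. rewrite oppD. apply addACA. Qed.

Lemma scal_sub {B : BanachSpace} (l : R) (x y : B) :
  bs_scal l (bs_sub x y) = bs_sub (bs_scal l x) (bs_scal l y).
Proof. unfold bs_sub. rewrite bs_scalDr, !opp_scal, !bs_scalA, Rmult_comm. reflexivity. Qed.

Lemma scal_eq0 {B : BanachSpace} (l : R) (x : B) : l <> 0 -> bs_scal l x = bs_zero -> x = bs_zero.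
Proof.
  intros Hl H. rewrite <- (bs_scal1 _ x), <- (Rinv_l l Hl), <- bs_scalA, H. apply scalx0.
Qed.

Lemma le_eps {x y : R} : (forall e, 0 < e -> x <= e + y) -> x <= y.
Proof.
  intro H. destruct (Rle_or_lt x y) as [h|h]; auto.
  specialize (H ((x - y)/2)). lra.
Qed.

Lemma norm_small_eq {B : BanachSpace} (x y : B) :
  (forall e, 0 < e -> bs_norm (bs_sub x y) <= e) -> x = y.
Proof.
  intro H. apply sub_eq0, bs_norm_eq0. apply Rle_antisym.
  - apply le_eps. intros e he. specialize (H e he). lra.
  - apply norm_ge0.
Qed.

Lemma archi (x : R) : exists n : nat, x <= INR n.
Proof.
  destruct (archimed x) as [h1 _].
  destruct (Z_le_gt_dec 0 (up x)) as [h|h].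
  - exists (Z.to_nat (up x)). rewrite INR_IZR_INZ, Z2Nat.id by lia. lra.
  - exists O. simpl. assert (h2 : (up x < 0)%Z) by lia. apply IZR_lt in h2. lra.
Qed.

Definition lim {B : BanachSpace} (u : nat -> B) (l : B) : Prop :=
  forall e, 0 < e -> exists N, forall n, (N <= n)%nat -> bs_norm (bs_sub (u n) l) < e.

Lemma lim_unique {B : BanachSpace} (u : nat -> B) l1 l2 : lim u l1 -> lim u l2 -> l1 = l2.
Proof.
  intros H1 H2. apply norm_small_eq. intros e he.
  destruct (H1 (e/2)) as [N1 h1]; [lra|]. destruct (H2 (e/2)) as [N2 h2]; [lra|].
  specialize (h1 (N1+N2)%nat ltac:(lia)). specialize (h2 (N1+N2)%nat ltac:(lia)).
  pose proof (sub_tri l1 (u (N1+N2)%nat) l2). rewrite sub_sym_norm in h1. lra.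
Qed.

Lemma lim_const {B : BanachSpace} (c : B) : lim (fun _ => c) c.
Proof. intros e he. exists O. intros. rewrite subrr, norm0. lra. Qed.

Lemma lim_ext {B : BanachSpace} (u v : nat -> B) l : (forall n, u n = v n) -> lim u l -> lim v l.
Proof. intros E H e he. destruct (H e he) as [N h]. exists N. intros. rewrite <- E. auto. Qed.

Lemma lim_shift {B : BanachSpace} (u : nat -> B) l : lim u l -> lim (fun n => u (S n)) l.
Proof. intros H e he. destruct (H e he) as [N h]. exists N. intros. apply h. lia. Qed.

Lemma lim_add {B : BanachSpace} (u v : nat -> B) l1 l2 : lim u l1 -> lim v l2 ->
  lim (fun n => bs_add (u n) (v n)) (bs_add l1 l2).
Proof.
  intros H1 H2 e he.
  destruct (H1 (e/2)) as [N1 h1]; [lra|]. destruct (H2 (e/2)) as [N2 h2]; [lra|].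
  exists (N1+N2)%nat. intros n hn. rewrite subD.
  specialize (h1 n ltac:(lia)). specialize (h2 n ltac:(lia)).
  pose proof (bs_normD _ (bs_sub (u n) l1) (bs_sub (v n) l2)). lra.
Qed.

Lemma lim_sub {B : BanachSpace} (u v : nat -> B) l1 l2 : lim u l1 -> lim v l2 ->
  lim (fun n => bs_sub (u n) (v n)) (bs_sub l1 l2).
Proof.
  intros H1 H2 e he.
  destruct (H1 (e/2)) as [N1 h1]; [lra|]. destruct (H2 (e/2)) as [N2 h2]; [lra|].
  exists (N1+N2)%nat. intros n hn. change (bs_norm (bs_sub (bs_add (u n) (bs_opp (v n))) (bs_add l1 (bs_opp l2))) < e). rewrite subD.
  specialize (h1 n ltac:(lia)). specialize (h2 n ltac:(lia)).
  pose proof (bs_normD _ (bs_sub (u n) l1) (bs_sub (bs_opp (v n)) (bs_opp l2))).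
  assert (bs_norm (bs_sub (bs_opp (v n)) (bs_opp l2)) = bs_norm (bs_sub (v n) l2)).
  { rewrite <- norm_opp. unfold bs_sub. rewrite oppD, !oppK. reflexivity. }
  lra.
Qed.

Lemma lim_le {B : BanachSpace} (u : nat -> B) l c M : lim u l ->
  (forall n, bs_norm (bs_sub (u n) c) <= M) -> bs_norm (bs_sub l c) <= M.
Proof.
  intros H Hb. apply le_eps. intros e he. destruct (H e he) as [N h].
  specialize (h N (le_n _)). specialize (Hb N).
  pose proof (sub_tri l (u N) c). rewrite sub_sym_norm in h. lra.
Qed.

Lemma lim_norm_le {B : BanachSpace} (u : nat -> B) l M : lim u l ->
  (forall n, bs_norm (u n) <= M) -> bs_norm l <= M.
Proof.
  intros H Hb. rewrite <- (sub0 l). apply (lim_le u); auto. intro n. rewrite sub0. auto.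
Qed.

Lemma lim_closed {B : BanachSpace} (E : B -> Prop) u l : closed_subspace E ->
  (forall n, E (u n)) -> lim u l -> E l.
Proof. intros (_ & _ & _ & HC) Hu Hl. exact (HC u l Hu Hl). Qed.

Lemma lin0 {B : BanachSpace} (T : B -> B) : is_linear T -> T bs_zero = bs_zero.
Proof.
  intros [Ha _]. apply (add_cancel (T bs_zero)). rewrite <- Ha, !bs_add0. reflexivity.
Qed.

Lemma lin_opp {B : BanachSpace} (T : B -> B) x : is_linear T -> T (bs_opp x) = bs_opp (T x).
Proof.
  intros HT. apply opp_unique. destruct HT as [Ha Hs]. rewrite <- Ha, bs_addN. apply lin0. split; auto.
Qed.

Lemma lin_sub {B : BanachSpace} (T : B -> B) x y : is_linear T -> T (bs_sub x y) = bs_sub (T x) (T y).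
Proof. intros HT. unfold bs_sub. rewrite (proj1 HT), lin_opp; auto. Qed.

Lemma lim_bl {B : BanachSpace} (T : B -> B) u l : is_bounded_linear T -> lim u l ->
  lim (fun n => T (u n)) (T l).
Proof.
  intros [HL [C HC]] H e he.
  destruct (H (e / (Rabs C + 1))) as [N h].
  { apply Rdiv_lt_0_compat; [lra|]. pose proof (Rabs_pos C); lra. }
  exists N. intros n hn. rewrite <- lin_sub by auto.
  specialize (h n hn). specialize (HC (bs_sub (u n) l)).
  pose proof (norm_ge0 (bs_sub (u n) l)). pose proof (Rabs_pos C). pose proof (Rle_abs C).
  assert (C * bs_norm (bs_sub (u n) l) <= (Rabs C + 1) * bs_norm (bs_sub (u n) l)) by nra.
  assert ((Rabs C + 1) * bs_norm (bs_sub (u n) l) < (Rabs C + 1) * (e / (Rabs C + 1))) by nra.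
  replace ((Rabs C + 1) * (e / (Rabs C + 1))) with e in * by (field; lra). lra.
Qed.

Fixpoint psum {B : BanachSpace} (f : nat -> B) (N : nat) : B :=
  match N with O => bs_zero | S k => bs_add (f O) (psum (fun k => f (S k)) k) end.

Lemma psum_ext {B : BanachSpace} (f g : nat -> B) N : (forall k, f k = g k) -> psum f N = psum g N.
Proof.
  revert f g. induction N; intros f g E; simpl; auto. rewrite E. f_equal. apply IHN. auto.
Qed.

Lemma psum_lin {B : BanachSpace} (T : B -> B) f N : is_linear T ->
  T (psum f N) = psum (fun k => T (f k)) N.
Proof.
  intro HT. revert f. induction N; intros f; simpl. apply lin0; auto.
  rewrite (proj1 HT), IHN. reflexivity.
Qed.

Lemma psum_back {B : BanachSpace} (f : nat -> B) N : psum f (S N) = bs_add (psum f N) (f N).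
Proof.
  revert f. induction N; intros f.
  - simpl. rewrite bs_add0, add0l. reflexivity.
  - change (psum f (S (S N))) with (bs_add (f O) (psum (fun k => f (S k)) (S N))).
    rewrite IHN. simpl. apply bs_addA.
Qed.

Lemma psum_split {B : BanachSpace} (f : nat -> B) n p :
  psum f (n + p) = bs_add (psum f n) (psum (fun k => f (n + k)%nat) p).
Proof.
  revert f. induction n; intros f.
  - simpl. rewrite add0l. apply psum_ext. reflexivity.
  - simpl. rewrite IHn, bs_addA. reflexivity.
Qed.

Lemma psum_closed {B : BanachSpace} (E : B -> Prop) f N : closed_subspace E ->
  (forall k, E (f k)) -> E (psum f N).
Proof.
  intros HE. revert f. induction N; intros f Hf; simpl. apply HE.
  apply HE; auto.
Qed.

Lemma psum_bound {B : BanachSpace} (f : nat -> B) M q N : 0 <= q < 1 ->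
  (forall k, bs_norm (f k) <= M * q ^ k) -> bs_norm (psum f N) <= M * (1 - q ^ N) / (1 - q).
Proof.
  intros Hq. revert f M. induction N; intros f M Hf; simpl.
  - rewrite norm0. replace (M * (1-1) / (1-q)) with 0 by (field; lra). lra.
  - specialize (IHN (fun k => f (S k)) (M * q)).
    assert (h : forall k, bs_norm (f (S k)) <= M * q * q ^ k).
    { intro k. specialize (Hf (S k)). simpl in Hf. lra. }
    specialize (IHN h). pose proof (bs_normD _ (f O) (psum (fun k => f (S k)) N)).
    specialize (Hf O). simpl in Hf.
    assert (M * q * (1 - q ^ N) / (1 - q) + M * 1 = M * (1 - q * q ^ N) / (1 - q)) by (field; lra).
    lra.
Qed.

Lemma series_conv {B : BanachSpace} (f : nat -> B) M q : 0 <= q < 1 ->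
  (forall k, bs_norm (f k) <= M * q ^ k) ->
  exists L, lim (psum f) L /\ bs_norm L <= M / (1 - q).
Proof.
  intros Hq Hf.
  assert (HM : 0 <= M). { specialize (Hf O). simpl in Hf. pose proof (norm_ge0 (f O)). lra. }
  assert (Htail : forall n p, bs_norm (bs_sub (psum f (n + p)) (psum f n)) <= M * q ^ n / (1 - q)).
  { intros n p. rewrite psum_split. rewrite bs_addC. unfold bs_sub. rewrite <- bs_addA, bs_addN, bs_add0.
    pose proof (psum_bound (fun k => f (n + k)%nat) (M * q ^ n) q p Hq) as h.
    assert (h' : forall k, bs_norm (f (n + k)%nat) <= M * q ^ n * q ^ k).
    { intro k. rewrite Rmult_assoc, <- pow_add. apply Hf. }
    specialize (h h'). pose proof (pow_le q p (proj1 Hq)). pose proof (pow_le q n (proj1 Hq)).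
    assert (M * q ^ n * (1 - q ^ p) / (1 - q) <= M * q ^ n / (1 - q)).
    { unfold Rdiv. apply Rmult_le_compat_r. left; apply Rinv_0_lt_compat; lra. assert (0 <= M * q ^ n) by (apply Rmult_le_pos; lra). nra. }
    lra. }
  destruct (bs_complete B (psum f)) as [L HL].
  - intros e he.
    destruct (pow_lt_1_zero q ltac:(rewrite Rabs_right; lra) (e * (1 - q) / (M + 1))) as [N HN].
    { apply Rdiv_lt_0_compat; [apply Rmult_lt_0_compat; lra | lra]. }
    exists N. intros m n hm hn.
    assert (key : forall n0, (N <= n0)%nat -> M * q ^ n0 / (1 - q) < e).
    { intros n0 h0. specialize (HN n0 h0). rewrite Rabs_right in HN by (apply Rle_ge, pow_le; lra).
      pose proof (pow_le q n0 (proj1 Hq)).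
      apply (Rmult_lt_compat_l (M + 1)) in HN; [|lra].
      replace ((M + 1) * (e * (1 - q) / (M + 1))) with (e * (1 - q)) in HN by (field; lra).
      apply (Rmult_lt_reg_r (1 - q)); [lra|].
      replace (M * q ^ n0 / (1 - q) * (1 - q)) with (M * q ^ n0) by (field; lra). nra. }
    destruct (Nat.le_ge_cases n m) as [h|h].
    + replace m with (n + (m - n))%nat by lia. specialize (Htail n (m - n)%nat). specialize (key n hn).
      change (bs_add (psum f (n + (m - n))) (bs_opp (psum f n))) with (bs_sub (psum f (n + (m - n))) (psum f n)).
      lra.
    + change (bs_add (psum f m) (bs_opp (psum f n))) with (bs_sub (psum f m) (psum f n)).
      rewrite sub_sym_norm.
      replace n with (m + (n - m))%nat by lia. specialize (Htail m (n - m)%nat). specialize (key m hm). lra.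
  - exists L. split. exact HL.
    apply (lim_norm_le (psum f)). exact HL.
    intro n. pose proof (psum_bound f M q n Hq Hf). pose proof (pow_le q n (proj1 Hq)).
    assert (M * (1 - q ^ n) / (1 - q) <= M / (1 - q)).
    { unfold Rdiv. apply Rmult_le_compat_r. left; apply Rinv_0_lt_compat; lra. nra. }
    lra.
Qed.

Definition Fm {B : BanachSpace} (Em Ep : B -> Prop) (m : nat) (w : B) : Prop :=
  exists a b, Em a /\ Ep b /\ w = bs_add a b /\ bs_norm a <= INR m /\ bs_norm b <= INR m.

Lemma lim_shiftn {B : BanachSpace} (u : nat -> B) l n : lim u l -> lim (fun k => u (n + k)%nat) l.
Proof. intros H e he. destruct (H e he) as [N h]. exists N. intros. apply h. lia. Qed.

Lemma Fm_all {B : BanachSpace} (Em Ep : B -> Prop) : complementary Em Ep ->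
  forall c, exists m, Fm Em Ep m c.
Proof.
  intros (_ & _ & _ & HD) c. destruct (HD c) as (a & b & ha & hb & e).
  destruct (archi (bs_norm a + bs_norm b)) as [m hm]. exists m.
  exists a, b. pose proof (norm_ge0 a). pose proof (norm_ge0 b). repeat split; auto; lra.
Qed.

Lemma baire {B : BanachSpace} (Em Ep : B -> Prop) : complementary Em Ep ->
  exists m c r, 0 < r /\ forall y, bs_norm (bs_sub y c) < r -> forall rho, 0 < rho ->
    exists z, Fm Em Ep m z /\ bs_norm (bs_sub z y) < rho.
Proof.
  intro HC. apply NNPP. intro Hn.
  assert (H : forall m c r, 0 < r -> exists y, bs_norm (bs_sub y c) < r /\
     exists rho, 0 < rho /\ forall z, Fm Em Ep m z -> rho <= bs_norm (bs_sub z y)).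
  { intros m c r hr. apply NNPP. intro Hn2. apply Hn. exists m, c, r. split; auto.
    intros y hy rho hrho. apply NNPP. intro Hn3. apply Hn2. exists y. split; auto.
    exists rho. split; auto. intros z hz. apply Rnot_lt_le. intro hlt. apply Hn3. eauto. }
  assert (step : forall m (p : B * R), exists p' : B * R, 0 < snd p ->
     0 < snd p' /\ snd p' <= snd p / 2 /\ bs_norm (bs_sub (fst p') (fst p)) <= snd p /\
     forall z, Fm Em Ep m z -> 2 * snd p' < bs_norm (bs_sub z (fst p'))).
  { intros m [c r]. simpl. destruct (Rlt_or_le 0 r) as [hr|hr].
    - destruct (H m c r hr) as (y & hy & rho & hrho & hz).
      exists (y, Rmin (r/2) (rho/3)). intros _. simpl.
      split; [apply Rmin_pos; lra|]. split; [apply Rmin_l|]. split; [lra|].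
      intros z Hz. specialize (hz z Hz). pose proof (Rmin_r (r/2) (rho/3)). lra.
    - exists (c, r). intro; lra. }
  set (g := fun m p => proj1_sig (constructive_indefinite_description _ (step m p))).
  assert (hg : forall m p, 0 < snd p -> 0 < snd (g m p) /\ snd (g m p) <= snd p / 2 /\
     bs_norm (bs_sub (fst (g m p)) (fst p)) <= snd p /\
     forall z, Fm Em Ep m z -> 2 * snd (g m p) < bs_norm (bs_sub z (fst (g m p))))
    by (intros m p; exact (proj2_sig (constructive_indefinite_description _ (step m p)))).
  set (sq := fix sq (n : nat) : B * R := match n with O => (bs_zero, 1) | S k => g k (sq k) end).
  set (c := fun n => fst (sq n)). set (r := fun n => snd (sq n)).
  assert (hr : forall n, 0 < r n).
  { induction n. unfold r; simpl; lra. apply (hg n (sq n) IHn). }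
  assert (hr2 : forall n, r (S n) <= r n / 2) by (intro n; apply (hg n (sq n) (hr n))).
  assert (hc : forall n, bs_norm (bs_sub (c (S n)) (c n)) <= r n) by (intro n; apply (hg n (sq n) (hr n))).
  assert (hF : forall n z, Fm Em Ep n z -> 2 * r (S n) < bs_norm (bs_sub z (c (S n))))
    by (intro n; apply (hg n (sq n) (hr n))).
  assert (hrp : forall n, r n <= (1/2) ^ n).
  { induction n. unfold r; simpl; lra. simpl. specialize (hr2 n). lra. }
  assert (hcp : forall n p, bs_norm (bs_sub (c (n + p)%nat) (c n)) <= 2 * r n - 2 * r (n + p)%nat).
  { intros n p. induction p.
    - rewrite Nat.add_0_r, subrr, norm0. lra.
    - replace (n + S p)%nat with (S (n + p)) by lia.
      pose proof (sub_tri (c (S (n + p))) (c (n + p)%nat) (c n)).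
      specialize (hc (n + p)%nat). specialize (hr2 (n + p)%nat). lra. }
  destruct (bs_complete B c) as [l Hl].
  { intros e he.
    destruct (pow_lt_1_zero (1/2) ltac:(rewrite Rabs_right; lra) (e/2) ltac:(lra)) as [N HN].
    exists N. intros m n hm hn.
    assert (key : forall n0, (N <= n0)%nat -> 2 * r n0 < e).
    { intros n0 h0. specialize (HN n0 h0). rewrite Rabs_right in HN by (apply Rle_ge, pow_le; lra).
      specialize (hrp n0). lra. }
    change (bs_norm (bs_sub (c m) (c n)) < e).
    destruct (Nat.le_ge_cases n m) as [h|h].
    + replace m with (n + (m - n))%nat by lia. specialize (hcp n (m - n)%nat).
      specialize (key n hn). pose proof (hr (n + (m - n))%nat). lra.
    + rewrite sub_sym_norm. replace n with (m + (n - m))%nat by lia. specialize (hcp m (n - m)%nat).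
      specialize (key m hm). pose proof (hr (m + (n - m))%nat). lra. }
  assert (hl : forall n, bs_norm (bs_sub l (c n)) <= 2 * r n).
  { intro n. apply (lim_le (fun k => c (n + k)%nat)). apply lim_shiftn. exact Hl.
    intro k. specialize (hcp n k). pose proof (hr (n + k)%nat). lra. }
  destruct (Fm_all Em Ep HC l) as [m Hm].
  specialize (hF m l Hm). specialize (hl (S m)). lra.
Qed.

Lemma sub_sub_swap {B : BanachSpace} (x y z t : B) :
  bs_sub (bs_sub x y) (bs_sub z t) = bs_sub (bs_sub x z) (bs_sub y t).
Proof.
  change (bs_sub (bs_add x (bs_opp y)) (bs_add z (bs_opp t)) = bs_sub (bs_sub x z) (bs_sub y t)).
  rewrite subD. unfold bs_sub. rewrite oppD. reflexivity.
Qed.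

Lemma sub_closed {B : BanachSpace} (E : B -> Prop) x y : closed_subspace E -> E x -> E y -> E (bs_sub x y).
Proof.
  intros (h0 & hadd & hs & _) hx hy. unfold bs_sub. rewrite opp_scal. auto.
Qed.

Lemma approx1 {B : BanachSpace} (Em Ep : B -> Prop) : complementary Em Ep ->
  exists L r, 0 <= L /\ 0 < r /\ forall w, bs_norm w < r -> forall eta, 0 < eta ->
    exists a b, Em a /\ Ep b /\ bs_norm a <= L /\ bs_norm b <= L /\
      bs_norm (bs_sub w (bs_add a b)) < eta.
Proof.
  intro HC. destruct (baire Em Ep HC) as (m & c & r & hr & H).
  exists (2 * INR m), r. split. pose proof (pos_INR m); lra. split; auto.
  intros w hw eta heta.
  assert (h1 : bs_norm (bs_sub (bs_add c w) c) < r) by (rewrite bs_addC, addK; auto).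
  destruct (H _ h1 (eta/2) ltac:(lra)) as (z1 & (a1 & b1 & ha1 & hb1 & e1 & na1 & nb1) & hz1).
  assert (h2 : bs_norm (bs_sub c c) < r) by (rewrite subrr, norm0; auto).
  destruct (H _ h2 (eta/2) ltac:(lra)) as (z2 & (a2 & b2 & ha2 & hb2 & e2 & na2 & nb2) & hz2).
  destruct HC as (HCm & HCp & _ & _).
  exists (bs_sub a1 a2), (bs_sub b1 b2).
  split; [apply sub_closed; auto|]. split; [apply sub_closed; auto|].
  split; [pose proof (norm_sub_le a1 a2); lra|]. split; [pose proof (norm_sub_le b1 b2); lra|].
  rewrite <- subD, <- e1, <- e2.
  replace w with (bs_sub (bs_add c w) c) by (rewrite bs_addC, addK; auto).
  rewrite sub_sub_swap. pose proof (norm_sub_le (bs_sub (bs_add c w) z1) (bs_sub c z2)).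
  rewrite (sub_sym_norm (bs_add c w)), (sub_sym_norm c) in H0. lra.
Qed.

Lemma approx2 {B : BanachSpace} (Em Ep : B -> Prop) : complementary Em Ep ->
  exists L, 0 <= L /\ forall w, exists a b, Em a /\ Ep b /\ bs_norm a <= L * bs_norm w /\
     bs_norm b <= L * bs_norm w /\ bs_norm (bs_sub w (bs_add a b)) <= bs_norm w / 2.
Proof.
  intro HC. destruct (approx1 Em Ep HC) as (M & r & hM & hr & H).
  destruct HC as (HCm & HCp & _ & _).
  exists (2 * M / r). split. apply Rmult_le_pos; [lra|]. left; apply Rinv_0_lt_compat; auto.
  intro w. pose proof (norm_ge0 w) as hw0. destruct hw0 as [hw|hw].
  - set (lam := r / (2 * bs_norm w)).
    assert (hl : 0 < lam) by (apply Rdiv_lt_0_compat; lra).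
    assert (hw' : bs_norm (bs_scal lam w) < r).
    { rewrite bs_normZ, Rabs_right by lra. unfold lam. field_simplify; lra. }
    destruct (H _ hw' (lam * bs_norm w / 2)) as (a & b & ha & hb & na & nb & e).
    { apply Rdiv_lt_0_compat; [apply Rmult_lt_0_compat|]; lra. }
    exists (bs_scal (/ lam) a), (bs_scal (/ lam) b).
    split; [apply HCm; auto|]. split; [apply HCp; auto|].
    assert (hil : 0 < / lam) by (apply Rinv_0_lt_compat; auto).
    assert (eq1 : / lam * M = 2 * M / r * bs_norm w) by (unfold lam; field; lra).
    split. { rewrite bs_normZ, Rabs_right by lra. rewrite <- eq1. apply Rmult_le_compat_l; lra. }
    split. { rewrite bs_normZ, Rabs_right by lra. rewrite <- eq1. apply Rmult_le_compat_l; lra. }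
    replace (bs_sub w (bs_add (bs_scal (/ lam) a) (bs_scal (/ lam) b)))
      with (bs_scal (/ lam) (bs_sub (bs_scal lam w) (bs_add a b))).
    2:{ rewrite scal_sub, bs_scalDr, bs_scalA. rewrite Rinv_l by lra. rewrite bs_scal1. reflexivity. }
    rewrite bs_normZ, Rabs_right by lra.
    apply (Rmult_lt_compat_l (/ lam)) in e; auto.
    replace (/ lam * (lam * bs_norm w / 2)) with (bs_norm w / 2) in e by (field; lra). lra.
  - symmetry in hw. apply bs_norm_eq0 in hw. subst w.
    exists bs_zero, bs_zero. split; [apply HCm|]. split; [apply HCp|].
    rewrite bs_add0, subrr, !norm0. repeat split; lra.
Qed.

Lemma addsubK {B : BanachSpace} (X Y Z : B) : bs_add (bs_add X Y) (bs_sub Z Y) = bs_add X Z.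
Proof. rewrite <- bs_addA, (bs_addC _ Y), subK. reflexivity. Qed.

Lemma proj_bound {B : BanachSpace} (Em Ep : B -> Prop) : complementary Em Ep ->
  exists K, 0 <= K /\ forall w, exists a b, Em a /\ Ep b /\ w = bs_add a b /\
     bs_norm a <= K * bs_norm w /\ bs_norm b <= K * bs_norm w.
Proof.
  intro HC. destruct (approx2 Em Ep HC) as (L & hL & H).
  pose proof HC as (HCm & HCp & _ & _).
  assert (H' : forall w, exists p : B * B, Em (fst p) /\ Ep (snd p) /\ bs_norm (fst p) <= L * bs_norm w /\
     bs_norm (snd p) <= L * bs_norm w /\ bs_norm (bs_sub w (bs_add (fst p) (snd p))) <= bs_norm w / 2).
  { intro w. destruct (H w) as (a & b & h). exists (a, b). exact h. }
  set (h := fun w => proj1_sig (constructive_indefinite_description _ (H' w))).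
  assert (hh : forall w, Em (fst (h w)) /\ Ep (snd (h w)) /\ bs_norm (fst (h w)) <= L * bs_norm w /\
     bs_norm (snd (h w)) <= L * bs_norm w /\ bs_norm (bs_sub w (bs_add (fst (h w)) (snd (h w)))) <= bs_norm w / 2)
    by (intro w; exact (proj2_sig (constructive_indefinite_description _ (H' w)))).
  exists (2 * L). split; [lra|]. intro w.
  set (stp := fun v => bs_sub v (bs_add (fst (h v)) (snd (h v)))).
  set (ws := fun N => iter_op stp N w).
  set (fa := fun k => fst (h (ws k))). set (fb := fun k => snd (h (ws k))).
  assert (hws : forall N, bs_norm (ws N) <= bs_norm w * (1/2) ^ N).
  { induction N. unfold ws; simpl. lra. change (ws (S N)) with (stp (ws N)). unfold stp.
    destruct (hh (ws N)) as (_ & _ & _ & _ & e). simpl. rewrite <- Rmult_assoc, (Rmult_comm (bs_norm w) (1/2)), Rmult_assoc. lra. }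
  assert (hid : forall N, bs_add (bs_add (psum fa N) (psum fb N)) (ws N) = w).
  { induction N. simpl. rewrite !add0l. reflexivity.
    rewrite !psum_back. change (ws (S N)) with (stp (ws N)). unfold stp.
    rewrite addACA. unfold fa, fb. rewrite addsubK. exact IHN. }
  assert (hfa : forall k, bs_norm (fa k) <= L * bs_norm w * (1/2) ^ k).
  { intro k. destruct (hh (ws k)) as (_ & _ & e & _). specialize (hws k). unfold fa.
    rewrite Rmult_assoc. eapply Rle_trans; [exact e|]. apply Rmult_le_compat_l; lra. }
  assert (hfb : forall k, bs_norm (fb k) <= L * bs_norm w * (1/2) ^ k).
  { intro k. destruct (hh (ws k)) as (_ & _ & _ & e & _). specialize (hws k). unfold fb.
    rewrite Rmult_assoc. eapply Rle_trans; [exact e|]. apply Rmult_le_compat_l; lra. }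
  destruct (series_conv fa _ (1/2) ltac:(lra) hfa) as (A & hA & nA).
  destruct (series_conv fb _ (1/2) ltac:(lra) hfb) as (Bv & hB & nB).
  assert (hw0 : lim ws bs_zero).
  { intros e he. pose proof (norm_ge0 w).
    destruct (pow_lt_1_zero (1/2) ltac:(rewrite Rabs_right; lra) (e / (bs_norm w + 1))) as [N HN].
    { apply Rdiv_lt_0_compat; lra. }
    exists N. intros n hn. rewrite sub0. specialize (HN n hn). specialize (hws n).
    rewrite Rabs_right in HN by (apply Rle_ge, pow_le; lra).
    pose proof (pow_le (1/2) n ltac:(lra)).
    apply (Rmult_lt_compat_l (bs_norm w + 1)) in HN; [|lra].
    replace ((bs_norm w + 1) * (e / (bs_norm w + 1))) with e in HN by (field; lra). nra. }
  pose proof (lim_add _ _ _ _ (lim_add _ _ _ _ hA hB) hw0) as hsum.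
  assert (hw : w = bs_add (bs_add A Bv) bs_zero).
  { apply (lim_unique (fun n => bs_add (bs_add (psum fa n) (psum fb n)) (ws n))); auto.
    apply (lim_ext (fun _ => w)). intro n. symmetry. apply hid. apply lim_const. }
  rewrite bs_add0 in hw.
  exists A, Bv. split.
  { apply (lim_closed Em (psum fa)); auto. intro n. apply psum_closed; auto. intro k. apply hh. }
  split.
  { apply (lim_closed Ep (psum fb)); auto. intro n. apply psum_closed; auto. intro k. apply hh. }
  split; auto. split.
  - replace (2 * L * bs_norm w) with (L * bs_norm w / (1 - 1/2)) by (field; lra). auto.
  - replace (2 * L * bs_norm w) with (L * bs_norm w / (1 - 1/2)) by (field; lra). auto.
Qed.

Lemma pow_le1 t k : 0 <= t <= 1 -> t ^ k <= 1.
Proof. intro h. induction k; simpl; nra. Qed.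

Lemma iter_comm {B : BanachSpace} (f : B -> B) j x : iter_op f (S j) x = iter_op f j (f x).
Proof. induction j; simpl; auto. simpl in IHj. rewrite IHj. reflexivity. Qed.

Definition orb {B : BanachSpace} (T Tinv : B -> B) (y : B) (n : Z) : B :=
  if (0 <=? n)%Z then iter_op T (Z.to_nat n) y else iter_op Tinv (Z.to_nat (- n)) y.

Lemma orb_step {B : BanachSpace} (T Tinv : B -> B) y n : (forall x, T (Tinv x) = x) ->
  orb T Tinv y (n + 1) = T (orb T Tinv y n).
Proof.
  intro HT. unfold orb. destruct (Z_le_gt_dec 0 n) as [h|h].
  - replace (0 <=? n + 1)%Z with true by (symmetry; apply Z.leb_le; lia).
    replace (0 <=? n)%Z with true by (symmetry; apply Z.leb_le; lia).
    replace (Z.to_nat (n + 1)) with (S (Z.to_nat n)) by lia. reflexivity.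
  - replace (0 <=? n)%Z with false by (symmetry; apply Z.leb_gt; lia).
    destruct (Z.eq_dec n (-1)) as [e|e].
    + subst n. simpl. rewrite HT. reflexivity.
    + replace (0 <=? n + 1)%Z with false by (symmetry; apply Z.leb_gt; lia).
      replace (Z.to_nat (- n)) with (S (Z.to_nat (- (n + 1)))) by lia. simpl. rewrite HT. reflexivity.
Qed.

Lemma not_usp {B : BanachSpace} (T Tinv : B -> B) (Em Ep : B -> Prop) x0 :
  is_linear T -> (forall x, T (Tinv x) = x) -> complementary Em Ep ->
  uniform_contraction_on T Ep -> uniform_contraction_on Tinv Em ->
  x0 <> bs_zero -> Em x0 -> Ep (T x0) -> ~ unique_shadowing_property T.
Proof.
  intros HL HTi (HCm & HCp & _ & _) (C1 & t1 & hC1 & ht1 & Hc1) (C2 & t2 & hC2 & ht2 & Hc2) hx0 hEm hEp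
    (eps0 & delta0 & he0 & hd0 & H).
  destruct (H eps0 he0 (Rle_refl _)) as (delta & hd & _ & Hx).
  destruct (Hx (fun _ => bs_zero)) as (y & _ & Hu).
  { intro n. rewrite lin0, subrr, norm0; auto. }
  set (M := bs_norm x0 + C1 * bs_norm (T x0) + C2 * bs_norm x0).
  pose proof (norm_ge0 x0). pose proof (norm_ge0 (T x0)).
  assert (hM : 0 <= M) by (unfold M; nra).
  set (s := eps0 / (2 * (M + 1))).
  assert (hs : 0 < s) by (apply Rdiv_lt_0_compat; lra).
  assert (hsM : s * M < eps0).
  { unfold s. apply (Rmult_lt_reg_r (2 * (M + 1))); [lra|].
    replace (eps0 / (2 * (M + 1)) * M * (2 * (M + 1))) with (eps0 * M) by (field; lra). nra. }
  assert (y0 : bs_zero = y).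
  { apply Hu. exists (fun _ => bs_zero). split; auto. split. intro; rewrite lin0; auto.
    intro n. rewrite subrr, norm0. auto. }
  assert (y1 : bs_scal s x0 = y).
  { apply Hu. exists (orb T Tinv (bs_scal s x0)). split. reflexivity.
    split. intro n. apply orb_step; auto.
    intro n. unfold bs_sub. rewrite add0l, norm_opp. apply (Rle_lt_trans _ (s * M)); auto.
    unfold orb. destruct (0 <=? n)%Z.
    - destruct (Z.to_nat n) as [|j].
      + simpl. rewrite bs_normZ, Rabs_right by lra. unfold M. assert (0 <= C1 * bs_norm (T x0)) by (apply Rmult_le_pos; lra). assert (0 <= C2 * bs_norm x0) by (apply Rmult_le_pos; lra). nra.
      + rewrite iter_comm. destruct HL as [_ HLs]. rewrite HLs.
        assert (Ep (bs_scal s (T x0))) by (apply HCp; auto).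
        specialize (Hc1 j _ H2). rewrite bs_normZ, Rabs_right in Hc1 by lra.
        pose proof (pow_le1 t1 j ltac:(lra)). pose proof (pow_le t1 j ltac:(lra)).
        set (p := t1 ^ j) in *.
        assert (C1 * p * (s * bs_norm (T x0)) <= C1 * (s * bs_norm (T x0))).
        { apply Rmult_le_compat_r. apply Rmult_le_pos; lra. pose proof (Rmult_le_compat_l C1 p 1 ltac:(lra) H3). lra. }
        assert (0 <= s * bs_norm x0) by (apply Rmult_le_pos; lra).
        assert (0 <= s * (C2 * bs_norm x0)) by (apply Rmult_le_pos; [lra|apply Rmult_le_pos; lra]).
        unfold M. lra.
    - assert (Em (bs_scal s x0)) by (apply HCm; auto).
      specialize (Hc2 (Z.to_nat (- n)) _ H2). rewrite bs_normZ, Rabs_right in Hc2 by lra.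
      pose proof (pow_le1 t2 (Z.to_nat (- n)) ltac:(lra)). pose proof (pow_le t2 (Z.to_nat (-n)) ltac:(lra)).
      set (p := t2 ^ _) in *.
      assert (C2 * p * (s * bs_norm x0) <= C2 * (s * bs_norm x0)).
      { apply Rmult_le_compat_r. apply Rmult_le_pos; lra. pose proof (Rmult_le_compat_l C2 p 1 ltac:(lra) H3). lra. }
      assert (0 <= s * bs_norm x0) by (apply Rmult_le_pos; lra).
      assert (0 <= s * (C1 * bs_norm (T x0))) by (apply Rmult_le_pos; [lra|apply Rmult_le_pos; lra]).
      unfold M. lra. }
  apply hx0. apply (scal_eq0 s). lra. rewrite y1, <- y0. reflexivity.
Qed.

Lemma alg_u {B : BanachSpace} (a b Y Z : B) :
  bs_sub (bs_add b Y) (bs_sub Z a) = bs_add (bs_add a b) (bs_sub Y Z).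
Proof.
  unfold bs_sub. rewrite oppD, oppK, (bs_addC _ (bs_opp Z)), addACA, (bs_addC _ b a). reflexivity.
Qed.

Lemma alg_z {B : BanachSpace} (d X Y : B) : bs_sub (bs_add d X) (bs_add d Y) = bs_sub X Y.
Proof. rewrite subD, subrr, add0l. reflexivity. Qed.

Lemma alg_xu {B : BanachSpace} (x u : B) : bs_sub x (bs_sub x u) = u.
Proof. unfold bs_sub. rewrite oppD, oppK, bs_addA, bs_addN, add0l. reflexivity. Qed.

Lemma shadowing {B : BanachSpace} (T Tinv : B -> B) (Em Ep : B -> Prop) :
  is_bounded_linear T -> (forall x, T (Tinv x) = x) -> complementary Em Ep ->
  uniform_contraction_on T Ep -> uniform_contraction_on Tinv Em -> shadowing_property T.
Proof.
  intros HBL HTi HC (C1 & t1 & hC1 & ht1 & Hc1) (C2 & t2 & hC2 & ht2 & Hc2).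
  pose proof HBL as [HL _].
  destruct (proj_bound Em Ep HC) as (K & hK & Hdec).
  intros eps heps.
  set (A := C1 / (1 - t1) + C2 / (1 - t2)).
  assert (hA : 0 <= A).
  { unfold A. assert (0 < C1 / (1 - t1)) by (apply Rdiv_lt_0_compat; lra).
    assert (0 < C2 / (1 - t2)) by (apply Rdiv_lt_0_compat; lra). lra. }
  assert (hKA : 0 <= K * A) by (apply Rmult_le_pos; lra).
  set (delta := eps / (2 * (K * A + 1))).
  assert (hd : 0 < delta) by (apply Rdiv_lt_0_compat; lra).
  assert (hKAd : K * A * delta < eps).
  { unfold delta. apply (Rmult_lt_reg_r (2 * (K * A + 1))); [lra|].
    replace (K * A * (eps / (2 * (K * A + 1))) * (2 * (K * A + 1))) with (K * A * eps) by (field; lra). nra. }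
  exists delta. split; auto. intros x Hx.
  assert (Hdec' : forall w, exists p : B * B, Em (fst p) /\ Ep (snd p) /\ w = bs_add (fst p) (snd p) /\
     bs_norm (fst p) <= K * bs_norm w /\ bs_norm (snd p) <= K * bs_norm w).
  { intro w. destruct (Hdec w) as (a & b & h). exists (a, b). exact h. }
  set (dp := fun w => proj1_sig (constructive_indefinite_description _ (Hdec' w))).
  assert (hdp : forall w, Em (fst (dp w)) /\ Ep (snd (dp w)) /\ w = bs_add (fst (dp w)) (snd (dp w)) /\
     bs_norm (fst (dp w)) <= K * bs_norm w /\ bs_norm (snd (dp w)) <= K * bs_norm w)
    by (intro w; exact (proj2_sig (constructive_indefinite_description _ (Hdec' w)))).
  set (d := fun n : Z => bs_sub (x (n + 1)%Z) (T (x n))).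
  set (pa := fun n => fst (dp (d n))). set (pb := fun n => snd (dp (d n))).
  assert (hpa : forall n, Em (pa n) /\ bs_norm (pa n) <= K * delta).
  { intro n. destruct (hdp (d n)) as (h1 & _ & _ & h2 & _). split; auto.
    specialize (Hx n). assert (K * bs_norm (d n) <= K * delta) by (apply Rmult_le_compat_l; unfold d; lra).
    unfold pa. lra. }
  assert (hpb : forall n, Ep (pb n) /\ bs_norm (pb n) <= K * delta).
  { intro n. destruct (hdp (d n)) as (_ & h1 & _ & _ & h2). split; auto.
    specialize (Hx n). assert (K * bs_norm (d n) <= K * delta) by (apply Rmult_le_compat_l; unfold d; lra).
    unfold pb. lra. }
  assert (hdab : forall n, d n = bs_add (pa n) (pb n)) by (intro n; apply hdp).
  set (f := fun (n : Z) (k : nat) => iter_op T k (pb (n - 1 - Z.of_nat k)%Z)).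
  set (g := fun (n : Z) (k : nat) => iter_op Tinv (S k) (pa (n + Z.of_nat k)%Z)).
  assert (HU : forall n, exists L, lim (psum (f n)) L /\ bs_norm L <= C1 * K * delta / (1 - t1)).
  { intro n. apply series_conv. lra. intro k. destruct (hpb (n - 1 - Z.of_nat k)%Z) as [h1 h2].
    specialize (Hc1 k _ h1). unfold f. pose proof (pow_le t1 k ltac:(lra)).
    set (p := t1 ^ k) in *. assert (C1 * p * bs_norm (pb (n - 1 - Z.of_nat k)%Z) <= C1 * p * (K * delta)).
    { apply Rmult_le_compat_l; auto. apply Rmult_le_pos; lra. }
    replace (C1 * K * delta * p) with (C1 * p * (K * delta)) by ring. lra. }
  assert (HV : forall n, exists L, lim (psum (g n)) L /\ bs_norm L <= C2 * K * delta / (1 - t2)).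
  { intro n. apply series_conv. lra. intro k. destruct (hpa (n + Z.of_nat k)%Z) as [h1 h2].
    specialize (Hc2 (S k) _ h1). unfold g. pose proof (pow_le t2 k ltac:(lra)).
    change (t2 ^ S k) with (t2 * t2 ^ k) in Hc2. set (p := t2 ^ k) in *.
    assert (C2 * (t2 * p) * bs_norm (pa (n + Z.of_nat k)%Z) <= C2 * (1 * p) * (K * delta)).
    { assert (t2 * p <= 1 * p) by (apply Rmult_le_compat_r; lra).
      assert (0 <= t2 * p) by (apply Rmult_le_pos; lra).
      apply Rmult_le_compat. apply Rmult_le_pos; lra. apply norm_ge0.
      apply Rmult_le_compat_l; lra. exact h2. }
    replace (C2 * K * delta * p) with (C2 * (1 * p) * (K * delta)) by ring. lra. }
  set (U := fun n => proj1_sig (constructive_indefinite_description _ (HU n))).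
  set (V := fun n => proj1_sig (constructive_indefinite_description _ (HV n))).
  assert (hU : forall n, lim (psum (f n)) (U n) /\ bs_norm (U n) <= C1 * K * delta / (1 - t1))
    by (intro n; exact (proj2_sig (constructive_indefinite_description _ (HU n)))).
  assert (hV : forall n, lim (psum (g n)) (V n) /\ bs_norm (V n) <= C2 * K * delta / (1 - t2))
    by (intro n; exact (proj2_sig (constructive_indefinite_description _ (HV n)))).
  assert (RU : forall n, U (n + 1)%Z = bs_add (pb n) (T (U n))).
  { intro n. apply (lim_unique (fun N => psum (f (n + 1)%Z) (S N))).
    - apply lim_shift. apply hU.
    - apply (lim_ext (fun N => bs_add (pb n) (T (psum (f n) N)))).
      + intro N. simpl. f_equal.
        * unfold f. simpl. f_equal. lia.
        * rewrite psum_lin by auto. apply psum_ext. intro k. unfold f.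
          rewrite Nat2Z.inj_succ. cbn [iter_op]. replace (n + 1 - 1 - Z.succ (Z.of_nat k))%Z with (n - 1 - Z.of_nat k)%Z by lia. reflexivity.
      + apply lim_add. apply lim_const. apply lim_bl; auto. apply hU. }
  assert (RV : forall n, T (V n) = bs_add (pa n) (V (n + 1)%Z)).
  { intro n. apply (lim_unique (fun N => T (psum (g n) (S N)))).
    - apply (lim_bl T (fun N => psum (g n) (S N))); auto. apply lim_shift. apply hV.
    - apply (lim_ext (fun N => bs_add (pa n) (psum (g (n + 1)%Z) N))).
      + intro N. simpl. rewrite (proj1 HL). f_equal.
        * unfold g. simpl. rewrite HTi. f_equal. lia.
        * rewrite psum_lin by auto. apply psum_ext. intro k. unfold g.
          rewrite Nat2Z.inj_succ. cbn [iter_op]. rewrite HTi. replace (n + Z.succ (Z.of_nat k))%Z with (n + 1 + Z.of_nat k)%Z by lia. reflexivity.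
      + apply lim_add. apply lim_const. apply hV. }
  set (u := fun n => bs_sub (U n) (V n)).
  set (z := fun n => bs_sub (x n) (u n)).
  exists (z 0%Z). exists z. split; auto. split.
  - intro n. unfold z, u.
    assert (hx1 : x (n + 1)%Z = bs_add (d n) (T (x n))) by (unfold d; rewrite subK; reflexivity).
    assert (hV1 : V (n + 1)%Z = bs_sub (T (V n)) (pa n)) by (rewrite RV, bs_addC, addK; reflexivity).
    rewrite hx1, RU, hV1, (alg_u (pa n) (pb n) (T (U n)) (T (V n))), <- hdab, alg_z. rewrite !(lin_sub T) by exact HL. reflexivity.
  - intro n. unfold z. rewrite alg_xu. unfold u.
    destruct (hU n) as [_ h1]. destruct (hV n) as [_ h2].
    pose proof (norm_sub_le (U n) (V n)).
    assert (C1 * K * delta / (1 - t1) + C2 * K * delta / (1 - t2) = K * A * delta) by (unfold A; field; lra).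
    lra.
Qed.

Theorem mainTheorem16 (B : BanachSpace) (T : B -> B) :
  is_aut T -> shifted_hyperbolic T ->
  shadowing_property T /\ ~ unique_shadowing_property T.
Proof.
  intros [HBL _] (Tinv & Em & Ep & HTi1 & HTi2 & (HC & HEp & HEm & Hc1 & Hc2) & x0 & hx0 & hEm & hEp).
  split.
  - exact (shadowing T Tinv Em Ep HBL HTi2 HC Hc1 Hc2).
  - exact (not_usp T Tinv Em Ep x0 (proj1 HBL) HTi2 HC Hc1 Hc2 hx0 hEm hEp).
Qed.
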